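(* For $N\ge1$ and generic complex $\mathfrak t,\chi,u_1,\dots,u_N,v_1,\dots,v_N$, $$\frac{1}{\prod_{1\le i<j\le N}(u_i-u_j)}\det\Big[u_j^{N-i-1}\Big\{(u_j-\mathfrak t^{1-N})\prod_{l=1}^N\frac{1-\mathfrak tu_jv_l}{1-u_jv_l}+\mathfrak t^{1-i}(1-\chi u_j)\Big\}\Big]_{i,j=1}^N$$ $$=\frac{\prod_{i,j=1}^N(1-\mathfrak tu_iv_j)}{\prod_{1\le i<j\le N}(u_i-u_j)(v_i-v_j)}\det\left[\frac{(1-\mathfrak t^{-N}\chi)\mathfrak t(1-u_iv_j)+(1-\mathfrak t)(1-\mathfrak t^{1-N}v_j)}{(1-u_iv_j)(1-\mathfrak tu_iv_j)}\right]_{i,j=1}^N.$$ *)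

(* Defs.v *)
(* Complex numbers are modelled as R[i] (mathcomp-real-closed
   `complex`) over a real numbers type R : realType. *)
From mathcomp Require Import all_boot all_order all_algebra.
From mathcomp Require Import complex reals.
Set Implicit Arguments. Unset Strict Implicit. Unset Printing Implicit Defensive.
Import Order.TTheory GRing.Theory Num.Theory.
Local Open Scope ring_scope.

Definition vdm (F : ringType) (N : nat) (x : 'I_N -> F) : F :=
  \prod_(i < N) \prod_(j < N | (i < j)%N) (x i - x j).

(* Left-hand matrix (indices 0-based: row i here is row i+1 of the paper):
   u_j^{N-(i+1)-1} { (u_j - t^{1-N}) prod_l (1 - t u_j v_l)/(1 - u_j v_l)
                     + t^{1-(i+1)} (1 - chi u_j) } *)
Definition lhs_mx (F : fieldType) (N : nat) (t chi : F) (u v : 'I_N -> F)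
  : 'M[F]_N :=
  \matrix_(i < N, j < N)
    (u j ^ (N%:Z - i%:Z - 2%:Z) *
     ((u j - t ^ (1 - N%:Z)) *
        (\prod_(l < N) ((1 - t * u j * v l) / (1 - u j * v l)))
      + t ^ (- i%:Z) * (1 - chi * u j))).

Definition rhs_mx (F : fieldType) (N : nat) (t chi : F) (u v : 'I_N -> F)
  : 'M[F]_N :=
  \matrix_(i < N, j < N)
    (((1 - t ^ (- N%:Z) * chi) * t * (1 - u i * v j)
       + (1 - t) * (1 - t ^ (1 - N%:Z) * v j))
     / ((1 - u i * v j) * (1 - t * u i * v j))).

(* Main.v *)
Require Import Defs.
From mathcomp Require Import all_boot all_order all_algebra.
From mathcomp Require Import complex reals.
From mathcomp Require Import ring zify.
Import Order.TTheory GRing.Theory Num.Theory.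
Set Implicit Arguments. Unset Strict Implicit. Unset Printing Implicit Defensive.
Local Open Scope ring_scope.

Section S.
Variable F : fieldType.

Definition rpol (n : nat) (v : 'I_n.+1 -> F) (j : 'I_n.+1) : {poly F} :=
  \prod_(l < n) ('X - (v (lift j l))%:P).
Definition Cmx (n : nat) (v : 'I_n.+1 -> F) : 'M[F]_n.+1 :=
  \matrix_(k, j) (rpol v j)`_k.

Lemma size_rpol n (v : 'I_n.+1 -> F) j : size (rpol v j) = n.+1.
Proof. by rewrite /rpol size_prod_XsubC /index_enum -enumT size_enum_ord. Qed.

Lemma prod_lift n (G : 'I_n.+1 -> F) i :
  \prod_(l < n.+1 | l != i) G l = \prod_(l < n) G (lift i l).
Proof.
rewrite (reindex_omap (lift i) (unlift i)) /=.
  by apply: eq_bigl => l; rewrite liftK eq_sym neq_lift ?eqxx ?andbT.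
by move=> l; case: unliftP => [k ->|->]; rewrite ?eqxx.
Qed.

Lemma detC n (v : 'I_n.+1 -> F) : injective v -> \det (Cmx v) = vdm v.
Proof.
move=> hv.
set V := Vandermonde n.+1 (\row_j v j).
have eq1 : V^T *m Cmx v = diag_mx (\row_i \prod_(l < n) (v i - v (lift i l))).
  apply/matrixP => i j; rewrite !mxE.
  have -> : \sum_k V^T i k * Cmx v k j = (rpol v j).[v i].
    rewrite (horner_coef_wide _ (eq_leq (size_rpol v j))).
    by apply: eq_bigr => k _; rewrite !mxE mulrC.
  rewrite /rpol horner_prod.
  case: (unliftP j i) => [l0 ->|->].
    rewrite (bigD1 l0) //= hornerXsubC subrr mul0r.
    by rewrite eq_sym (negbTE (neq_lift _ _)) mulr0n.
  rewrite eqxx mulr1n ?mxE; apply: eq_bigr => l _; by rewrite hornerXsubC.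
have dV : \det V != 0.
  rewrite det_Vandermonde; apply/prodf_neq0 => i _; apply/prodf_neq0 => j ij.
  rewrite !mxE subr_eq0; apply/eqP => /hv h; by move: ij; rewrite h ltnn.
apply: (mulfI dV); rewrite -det_tr -det_mulmx eq1 det_diag.
have -> : \prod_i (\row_i0 \prod_(l < n) (v i0 - v (lift i0 l))) 0 i
   = \prod_(i < n.+1) \prod_(l < n.+1 | l != i) (v i - v l).
  by apply: eq_bigr => i _; rewrite mxE prod_lift.
rewrite /vdm det_tr /V det_Vandermonde.
have -> : \prod_(i < n.+1) \prod_(j < n.+1 | (i < j)%N) ((\row_j0 v j0) 0 j - (\row_j0 v j0) 0 i)
   = \prod_(j < n.+1) \prod_(i < n.+1 | (i < j)%N) (v j - v i).
  rewrite [RHS](eq_bigr (fun j : 'I_n.+1 => \prod_(i < n.+1) (if (i < j)%N then v j - v i else 1))); last first.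
    by move=> j _; rewrite big_mkcond.
  rewrite [RHS]exchange_big /=; apply: eq_bigr => i _; rewrite big_mkcond /=.
  by apply: eq_bigr => j _; rewrite !mxE.
rewrite mulrC -big_split /=; apply: eq_bigr => i _.
rewrite (bigID (fun l : 'I_n.+1 => (i < l)%N)) /=; congr (_ * _).
  apply: eq_bigl => l /=; rewrite -(inj_eq val_inj) /=; case: ltngtP => //.
apply: eq_bigl => l /=; rewrite -(inj_eq val_inj) /=; case: ltngtP => //.
Qed.

Lemma sumA n (v : 'I_n.+1 -> F) j (x c : F) : x != 0 -> c != 0 ->
  \sum_(k < n.+1) x ^+ (n - k) / x * (c ^+ k)^-1 * (rpol v j)`_k
   = x^-1 * (c ^+ n)^-1 * \prod_(l < n) (1 - c * x * v (lift j l)).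
Proof.
move=> x0 c0; have cx0 : c * x != 0 by rewrite mulf_neq0.
have hp : \prod_(l < n) (1 - c * x * v (lift j l))
    = (c * x) ^+ n * (rpol v j).[(c * x)^-1].
  rewrite /rpol horner_prod.
  have -> : (c * x) ^+ n = \prod_(l < n) (c * x) by rewrite prodr_const card_ord.
  rewrite -big_split /=; apply: eq_bigr => l _.
  by rewrite hornerXsubC mulrBr mulfV.
rewrite hp (horner_coef_wide _ (eq_leq (size_rpol v j))) !mulr_sumr.
apply: eq_bigr => k _.
set r := (rpol v j)`_k; clearbody r.
have : (k <= n)%N := ltn_ord k.
move: (nat_of_ord k) => m hk.
rewrite -[in RHS](subnK hk) !exprD !exprMn !exprVn.
rewrite exprMn. field.
by rewrite !expf_neq0 ?x0.
Qed.


Lemma e1 (x : F) n (k : nat) : x != 0 -> (k <= n)%N ->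
  x ^ (n.+1%:Z - k%:Z - 2%:Z) = x ^+ (n - k) / x.
Proof.
move=> x0 hk.
have -> : n.+1%:Z - k%:Z - 2%:Z = (n - k)%N%:Z + (-1) by lia.
by rewrite expfzDr // exprN1 -exprnP.
Qed.

Lemma e2 (t : F) n : t ^ (1 - n.+1%:Z) = (t ^+ n)^-1.
Proof. have -> : 1 - n.+1%:Z = - n%:Z by lia. by rewrite -exprnN. Qed.

Lemma e3 (t : F) (k : nat) : t ^ (- k%:Z) = (t ^+ k)^-1.
Proof. by rewrite -exprnN. Qed.

Lemma key n (t chi : F) (u v : 'I_n.+1 -> F) :
  t != 0 -> (forall j, u j != 0) ->
  (forall i j, 1 - u i * v j != 0) -> (forall i j, 1 - t * u i * v j != 0) ->
  (lhs_mx t chi u v)^T *m Cmx v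
  = diag_mx (\row_i \prod_(l < n.+1) (1 - t * u i * v l)) *m rhs_mx t chi u v.
Proof.
move=> t0 hu0 huv htuv; apply/matrixP => i j.
rewrite mul_diag_mx !mxE.
set x := u i.
have x0 : x != 0 := hu0 i.
set P := \prod_(l < n.+1) ((1 - t * x * v l) / (1 - x * v l)).
set s := t ^ (1 - n.+1%:Z).
have -> : \sum_k (lhs_mx t chi u v)^T i k * Cmx v k j
   = (x - s) * P * (\sum_(k < n.+1) x ^+ (n - k) / x * (1 ^+ k)^-1 * (rpol v j)`_k)
     + (1 - chi * x) * (\sum_(k < n.+1) x ^+ (n - k) / x * (t ^+ k)^-1 * (rpol v j)`_k).
  rewrite !mulr_sumr -big_split /=; apply: eq_bigr => k _.
  have hk : (k <= n)%N by have := ltn_ord k.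
  rewrite !mxE e1 // e3 -/x -/P -/s expr1n invr1.
  ring.
rewrite !sumA ?oner_neq0 // expr1n invr1 /s e2.
rewrite /P (bigD1_ord j (P := predT)) //= (bigD1_ord j (P := predT)) //=.
set Pr := \prod_(i0 < n) _.
set q := \prod_(l < n) (1 - 1 * x * v (lift j l)).
set Q := \prod_(i0 < n) (1 - t * x * v (lift j i0)).
have hPQ : Pr * q = Q.
  rewrite /Pr /q /Q -big_split /=; apply: eq_bigr => l _.
  by rewrite mul1r divfK // huv.
rewrite -hPQ.
have h1 := huv i j; have h2 := htuv i j; rewrite -/x in h1 h2.
have tn : t ^+ n != 0 by rewrite expf_neq0.
rewrite e3 exprSr.
field.
by rewrite h1 h2 tn t0 x0.
Qed.


Lemma main_gen n (t chi : F) (u v : 'I_n.+1 -> F) :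
  t != 0 -> (forall j, u j != 0) -> injective v ->
  (forall i j, 1 - u i * v j != 0) -> (forall i j, 1 - t * u i * v j != 0) ->
  (vdm u)^-1 * \det (lhs_mx t chi u v)
  = (\prod_(i < n.+1) \prod_(j < n.+1) (1 - t * u i * v j))
      / (vdm u * vdm v) * \det (rhs_mx t chi u v).
Proof.
move=> t0 hu0 hv huv htuv.
have := congr1 determinant (key chi t0 hu0 huv htuv).
rewrite !det_mulmx det_tr detC // det_diag.
have -> : \prod_i (\row_i0 \prod_(l < n.+1) (1 - t * u i0 * v l)) 0 i
   = \prod_(i < n.+1) \prod_(j < n.+1) (1 - t * u i * v j).
  by apply: eq_bigr => i _; rewrite mxE.
have vv0 : vdm v != 0.
  apply/prodf_neq0 => i _; apply/prodf_neq0 => j ij.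
  rewrite subr_eq0; apply/eqP => /hv h; by move: ij; rewrite h ltnn.
move=> h; rewrite -[\det (lhs_mx _ _ _ _)](mulfK vv0) h invfM.
ring.
Qed.

End S.

Theorem mainTheorem6 (R : realType) (N : nat) (t chi : R[i])
  (u v : 'I_N -> R[i])
  (hN : (1 <= N)%N)
  (ht : t != 0)
  (hu0 : forall j, u j != 0)
  (hu : injective u) (hv : injective v)
  (huv : forall i j, 1 - u i * v j != 0)
  (htuv : forall i j, 1 - t * u i * v j != 0) :
  (vdm u)^-1 * \det (lhs_mx t chi u v)
  = (\prod_(i < N) \prod_(j < N) (1 - t * u i * v j))
      / (vdm u * vdm v) * \det (rhs_mx t chi u v).
Proof.
case: N hN u v hu0 hu hv huv htuv => [//|n] _ u v hu0 hu hv huv htuv.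
exact: main_gen.
Qed.
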